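(* Let $r>1$ and integers $N\ge1$, $K>2$, and let $L(r,K,N)$ and $U(r,K,N)$ denote respectively $\frac{\gamma_1^*(r,K,N)}{\frac{r^N-(r-1)^N}{r^{N-1}}+\gamma_1^*(r,K,N)}$ and $\frac{\gamma_2^*(r,K,N)}{\frac{r^N-(r-1)^N}{r^{N-1}}+\gamma_2^*(r,K,N)}$, where $\gamma_1^*(r,K,N)=N\sum_{i=N}^\infty\frac1i(1-\frac1r)^i(1-\frac1{K-1})^i$ and $\gamma_2^*(r,K,N)=N\sum_{i=N}^\infty\frac1i(1-\frac1r)^i$. Then: (i) for fixed $r,N$, $U(r,K,N)-L(r,K,N)\to0$ as $K\to\infty$; (ii) for fixed $r,K$, $\lim_{N\to\infty}\eta(r,K,N)=0$; (iii) $\lim_{r\to\infty}\left(\lim_{K\to\infty}\eta(r,K,N)\right)=1$; (iv) for fixed $r,K$, $\eta(r,K,N)=O\big((1-1/r)^N\big)$ as $N\to\infty$.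
   Context: Single item auction with $N$ buyers whose values are i.i.d., each taking values $0<x^1<\dots<x^K$ with probabilities $p^i>0$, $\sum_ip^i=1$. Let $z^i=(\sum_{j=1}^ip^j)^N-(\sum_{j=1}^{i-1}p^j)^N$ and reserve index $t(x,p)=\max\{i: i\in\arg\max_{1\le k\le K}x^k\sum_{j=k}^Kp^j\}$. The efficiency loss ratio of the welfare-maximizing revenue-optimal auction is $\mathrm{ELR}_N(x,p)=\sum_{i=1}^{t(x,p)-1}z^ix^i/\sum_{i=1}^Kz^ix^i$. $\eta(r,K,N)$ is the supremum of $\mathrm{ELR}_N(x,p)$ over all such $p$ and all $x$ with $0<x^1<\dots<x^K\le rx^1$. *)

(* Defs.v *)
From HB Require Import structures.
From mathcomp Require Import all_boot all_order all_algebra.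
From mathcomp Require Import all_classical all_reals all_analysis.
Set Implicit Arguments. Unset Strict Implicit. Unset Printing Implicit Defensive.
Import Order.TTheory GRing.Theory Num.Theory.
Import numFieldNormedType.Exports.
Local Open Scope classical_set_scope.
Local Open Scope ring_scope.

Section Auction.
Variable R : realType.

(* Values x 1 < ... < x K and probabilities p 1, ..., p K (indices 1..K;
   values of x, p outside 1..K are irrelevant). *)

Definition cumP (p : nat -> R) (i : nat) : R := \sum_(1 <= j < i.+1) p j.

Definition zcoef (N : nat) (p : nat -> R) (i : nat) : R :=
  (cumP p i) ^+ N - (cumP p i.-1) ^+ N.

Definition rev (K : nat) (x p : nat -> R) (k : nat) : R :=
  x k * \sum_(k <= j < K.+1) p j.

(* t(x,p) = largest maximizer of rev over 1 <= k <= K *)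
Definition reserve (K : nat) (x p : nat -> R) : nat :=
  \max_(1 <= i < K.+1 |
          [forall k : 'I_K.+1, (0 < (k : nat))%N ==> (rev K x p k <= rev K x p i)]) i.

Definition ELR (K N : nat) (x p : nat -> R) : R :=
  (\sum_(1 <= i < reserve K x p) zcoef N p i * x i) /
  (\sum_(1 <= i < K.+1) zcoef N p i * x i).

Definition admissible (r : R) (K : nat) (x p : nat -> R) : Prop :=
  (forall i, (1 <= i <= K)%N -> 0 < p i) /\
  \sum_(1 <= i < K.+1) p i = 1 /\
  0 < x 1%N /\
  (forall i, (1 <= i < K)%N -> x i < x i.+1) /\
  x K <= r * x 1%N.

Definition etaELR (r : R) (K N : nat) : R :=
  sup [set e | exists x p : nat -> R, admissible r K x p /\ e = ELR K N x p].

Definition gamma1 (r : R) (K N : nat) : R :=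
  N%:R * \big[+%R/0]_(N <= i <oo) (i%:R^-1 * (1 - r^-1) ^+ i * (1 - (K%:R - 1)^-1) ^+ i).

Definition gamma2 (r : R) (K N : nat) : R :=
  N%:R * \big[+%R/0]_(N <= i <oo) (i%:R^-1 * (1 - r^-1) ^+ i).

Definition base (r : R) (N : nat) : R := (r ^+ N - (r - 1) ^+ N) / r ^+ N.-1.

Definition Lb (r : R) (K N : nat) : R := gamma1 r K N / (base r N + gamma1 r K N).
Definition Ub (r : R) (K N : nat) : R := gamma2 r K N / (base r N + gamma2 r K N).

End Auction.

(* Main.v *)
Require Import Defs.
From HB Require Import structures.
From mathcomp Require Import all_boot all_order all_algebra.
From mathcomp Require Import all_classical all_reals all_analysis.
From mathcomp Require Import ring lra.
Import Order.TTheory GRing.Theory Num.Theory.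
Import numFieldNormedType.Exports.
Local Open Scope classical_set_scope.
Local Open Scope ring_scope.
Set Implicit Arguments. Unset Strict Implicit. Unset Printing Implicit Defensive.
Lemma bigmax_att (r : seq nat) (P : pred nat) :
  \max_(i <- r | P i) i = 0%N \/ ((\max_(i <- r | P i) i) \in r /\ P (\max_(i <- r | P i) i)).
Proof.
elim: r => [|h r IH] /=; first by rewrite big_nil; left.
rewrite big_cons; case: ifP => Ph; last first.
  case: IH => [->|[H1 H2]]; [by left|right; split=> //].
  by rewrite inE H1 orbT.
rewrite /maxn; case: ifP => hM.
  case: IH => [E|[H1 H2]]; first by rewrite E in hM.
  by right; rewrite inE H1 orbT.
by right; rewrite inE eqxx.
Qed.

Section A.
Variable R : realType.
Implicit Types x p : nat -> R.
Implicit Types r : R.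

Lemma reserveP K x p :
  reserve K x p = 0%N \/
  [/\ (1 <= reserve K x p <= K)%N,
      (forall k, (1 <= k <= K)%N -> Defs.rev K x p k <= Defs.rev K x p (reserve K x p)) &
      (forall i, (reserve K x p < i <= K)%N -> Defs.rev K x p i < Defs.rev K x p (reserve K x p))].
Proof.
rewrite /reserve.
set P := (fun i => [forall k : 'I_K.+1, (0 < (k : nat))%N ==> (Defs.rev K x p k <= Defs.rev K x p i)]).
case: (bigmax_att (index_iota 1 K.+1) P) => [->|[tin Pt]]; [by left|right].
move: tin Pt; set t := \max_(i <- _ | _) i => tin Pt.
have /andP[t1 tK] : (1 <= t < K.+1)%N by rewrite -mem_index_iota.
split.
- by rewrite t1.
- move=> k /andP[k1 kK].
  have kK' : (k < K.+1)%N by [].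
  by have := implyP (forallP Pt (Ordinal kK')) k1.
- move=> i /andP[ti iK]; rewrite ltNge; apply/negP => le.
  have Pi : P i.
    apply/forallP => k; apply/implyP => k0.
    by apply: le_trans le; exact: (implyP (forallP Pt k) k0).
  have iin : i \in index_iota 1 K.+1 by rewrite mem_index_iota ltnS iK andbT (ltnW (leq_ltn_trans t1 ti)).
  have := leq_bigmax_seq (F := fun i => i) i iin Pi.
  by rewrite -/t leqNgt ti.
Qed.

Lemma cumP0 p : cumP p 0 = 0. Proof. by rewrite /cumP big_geq. Qed.
Lemma cumPS p i : cumP p i.+1 = cumP p i + p i.+1.
Proof. by rewrite /cumP big_nat_recr. Qed.

Lemma sum_zcoef N p n :
  \sum_(1 <= i < n.+1) zcoef N p i = cumP p n ^+ N - cumP p 0 ^+ N.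
Proof.
rewrite big_add1 /=; by rewrite (telescope_sumr_eq (fun i => cumP p i ^+ N) (fun i => zcoef N p i.+1)) //.
Qed.

Section Inst.
Variables (K : nat) (x p : nat -> R).
Hypothesis pos : forall i, (1 <= i <= K)%N -> 0 < p i.

Lemma cumP_ge0 i : (i <= K)%N -> 0 <= cumP p i.
Proof.
elim: i => [|i IH] iK; first by rewrite cumP0.
rewrite cumPS addr_ge0 ?IH ?(ltnW iK) //; apply/ltW/pos; by rewrite iK.
Qed.

Lemma cumP_le i j : (i <= j <= K)%N -> cumP p i <= cumP p j.
Proof.
elim: j => [|j IH] /andP[ij jK]; first by move: ij; rewrite leqn0 => /eqP->.
move: ij; rewrite leq_eqVlt => /orP[/eqP->//|ij].
rewrite cumPS; apply: (le_trans (IH _)); first by rewrite -ltnS ij (ltnW jK).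
rewrite lerDl; apply/ltW/pos; by rewrite jK.
Qed.

Lemma zcoef_ge0 N i : (1 <= i <= K)%N -> 0 <= zcoef N p i.
Proof.
case: i => // i /andP[_ iK]; rewrite /zcoef subr_ge0 /=.
apply: lerXn2r; rewrite ?nnegrE ?cumP_ge0 ?(ltnW iK) //.
by apply: cumP_le; rewrite leqnSn.
Qed.

Lemma cumP_tail t : (1 <= t <= K.+1)%N ->
  cumP p K = cumP p t.-1 + \sum_(t <= j < K.+1) p j.
Proof.
case: t => // t /andP[_ tK]; rewrite /cumP /= (big_cat_nat _ (n := t.+1)) //.
Qed.

Hypothesis xinc : forall i, (1 <= i < K)%N -> x i < x i.+1.
Lemma x_mono i j : (1 <= i)%N -> (i <= j <= K)%N -> x i <= x j.
Proof.
move=> i1; elim: j => [|j IH] /andP[ij jK]; first by move: ij; rewrite leqn0 => /eqP Ei; rewrite Ei in i1.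
move: ij; rewrite leq_eqVlt => /orP[/eqP->//|ij].
apply: (le_trans (IH _)); first by rewrite -ltnS ij (ltnW jK).
apply/ltW/xinc; by rewrite jK (leq_trans i1 ij).
Qed.
End Inst.

Lemma ELR_facts r K N x p : admissible r K x p ->
  [/\ 0 <= ELR K N x p, ELR K N x p <= 1, 1 <= r &
      ((1 <= N)%N -> ELR K N x p <= r * (1 - r^-1) ^+ N)].
Proof.
move=> [pos [sum1 [x1 [xinc xK]]]]; rewrite /ELR.
have K1 : (1 <= K)%N by case: K sum1 {pos xinc xK} => // ; rewrite big_geq // => /eqP; rewrite eq_sym oner_eq0.
have xpos i : (1 <= i <= K)%N -> x 1%N <= x i.
  by move=> /andP[i1 iK]; apply: (x_mono xinc) => //; rewrite i1 iK.
have xle i : (1 <= i <= K)%N -> x i <= r * x 1%N.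
  by move=> /andP[i1 iK]; apply: le_trans xK; apply: (x_mono xinc) => //; rewrite iK leqnn.
have r1 : 1 <= r.
  have := xle 1%N; rewrite K1 /= => /(_ isT).
  by rewrite -{1}(mul1r (x 1%N)) ler_pM2r.
have zx i : (1 <= i <= K)%N -> 0 <= zcoef N p i * x i.
  move=> iK; rewrite mulr_ge0 ?(zcoef_ge0 pos) //.
  exact: le_trans (ltW x1) (xpos _ iK).
set den := \sum_(1 <= i < K.+1) zcoef N p i * x i.
have q0 : 0 <= 1 - r^-1 by rewrite subr_ge0 invf_le1 // (lt_le_trans ltr01).
have rq0 : 0 <= r * (1 - r^-1) ^+ N by rewrite mulr_ge0 ?exprn_ge0 // (le_trans ler01).
case: (reserveP K x p) => [->|[/andP[t1 tK] revt revlt]].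
  by rewrite big_geq // mul0r lexx ler01 r1.
set t := reserve K x p in t1 tK revt revlt *.
set num := \sum_(1 <= i < t) zcoef N p i * x i.
have dsplit : den = num + \sum_(t <= i < K.+1) zcoef N p i * x i.
  by rewrite /den (big_cat_nat _ (n := t)) //= ltnW.
have num0 : 0 <= num.
  rewrite /num big_nat_cond; apply: sumr_ge0 => i /andP[/andP[i1 it] _].
  by apply: zx; rewrite i1 (leq_trans (ltnW it)).
have tl0 : 0 <= \sum_(t <= i < K.+1) zcoef N p i * x i.
  rewrite big_nat_cond; apply: sumr_ge0 => i /andP[/andP[ti iK] _].
  by apply: zx; rewrite (leq_trans t1 ti) -ltnS.
have numden : num <= den by rewrite dsplit lerDl.
have [den0|den0] := eqVneq den 0.
  by rewrite den0 invr0 mulr0 lexx ler01 r1.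
have denp : 0 < den by rewrite lt_neqAle eq_sym den0 (le_trans num0).
split => //.
- by rewrite divr_ge0 // ltW.
- by rewrite ler_pdivrMr // mul1r.
move=> N1.
have dx : x 1%N <= den.
  have -> : x 1%N = \sum_(1 <= i < K.+1) zcoef N p i * x 1%N.
    rewrite -big_distrl /= sum_zcoef cumP0 expr0n /=.
    have -> : (N == 0%N) = false by move: N1; rewrite lt0n => /negbTE.
    by rewrite subr0 /cumP sum1 expr1n mul1r.
  rewrite /den big_nat_cond [X in _ <= X]big_nat_cond; apply: ler_sum => i /andP[iK _].
  rewrite ler_wpM2l ?xpos ?(zcoef_ge0 pos) //.
have Ft0 : 0 <= cumP p t.-1 by apply: (cumP_ge0 pos); rewrite (leq_trans (leq_pred t)).
have Fq : cumP p t.-1 <= 1 - r^-1.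
  have tail := @cumP_tail K p t; rewrite t1 ltnW //= in tail.
  have St : \sum_(t <= j < K.+1) p j = 1 - cumP p t.-1.
    by rewrite -[1](_ : cumP p K = 1) // (tail isT) addrC addKr.
  have := revt 1%N; rewrite K1 /= => /(_ isT).
  rewrite /Defs.rev St /cumP sum1 mulr1 => h.
  have h2 : x 1%N <= (r * x 1%N) * (1 - cumP p t.-1).
    apply: (le_trans h); rewrite ler_wpM2r ?xle ?t1 //.
    by rewrite -St big_nat_cond sumr_ge0 // => i /andP[/andP[ti iK] _]; apply/ltW/pos; rewrite (leq_trans t1 ti) -ltnS.
  have h3 : 1 <= r * (1 - cumP p t.-1).
    by move: h2; rewrite mulrAC -{1}(mul1r (x 1%N)) ler_pM2r.
  have rp : 0 < r by rewrite (lt_le_trans ltr01).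
  rewrite lerBrDl addrC -lerBrDl; rewrite -(ler_pM2l rp) mulfV ?gt_eqF //.
have numb : num <= (r * x 1%N) * (1 - r^-1) ^+ N.
  apply: (@le_trans _ _ (\sum_(1 <= i < t) zcoef N p i * (r * x 1%N))).
    rewrite /num big_nat_cond [X in _ <= X]big_nat_cond; apply: ler_sum => i /andP[/andP[i1 it] _].
    by rewrite ler_wpM2l ?xle ?(zcoef_ge0 pos) ?i1 ?(leq_trans (ltnW it)).
  rewrite -big_distrl /= mulrC; apply: ler_wpM2l.
    by rewrite mulr_ge0 // ?(le_trans ler01 r1) // ltW.
  have sz := sum_zcoef N p t.-1; rewrite (prednK t1) in sz.
  rewrite sz cumP0 expr0n; apply: (@le_trans _ _ (cumP p t.-1 ^+ N)).
    by rewrite lerBlDr lerDl; case: (N == 0%N).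
  by apply: lerXn2r; rewrite ?nnegrE.
rewrite ler_pdivrMr //; apply: (le_trans numb).
by rewrite mulrAC ler_wpM2l.
Qed.

Definition ES (r : R) K N : set R := [set e | exists x p : nat -> R, admissible r K x p /\ e = ELR K N x p].

Lemma ES_ub r K N : has_ubound (ES r K N).
Proof. by exists 1 => e [x [p [ad ->]]]; case: (ELR_facts N ad). Qed.

Lemma etaELR_ge r K N x p : admissible r K x p -> ELR K N x p <= etaELR r K N.
Proof. by move=> ad; apply: (ub_le_sup (ES_ub r K N)); exists x, p. Qed.

Lemma etaELR_ub r K N b : 0 <= b ->
  (forall x p, admissible r K x p -> ELR K N x p <= b) -> etaELR r K N <= b.
Proof.
move=> b0 H; rewrite /etaELR -/(ES r K N).
case: (pselect (ES r K N !=set0)) => [ne|e0].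
  by apply: ge_sup => // e [x [p [ad ->]]]; apply: H.
have -> : ES r K N = set0.
  by apply/seteqP; split=> y Sy //; exfalso; apply: e0; exists y.
by rewrite sup0.
Qed.

Lemma etaELR_ge0 r K N : 0 <= etaELR r K N.
Proof.
rewrite /etaELR -/(ES r K N).
case: (pselect (ES r K N !=set0)) => [[e Se]|e0].
  apply: le_trans (ub_le_sup (ES_ub r K N) Se).
  by case: Se => x [p [ad ->]]; case: (ELR_facts N ad).
have -> : ES r K N = set0.
  by apply/seteqP; split=> y Sy //; exfalso; apply: e0; exists y.
by rewrite sup0.
Qed.

Lemma etaELR_le1 r K N : etaELR r K N <= 1.
Proof. by apply: etaELR_ub => // x p ad; case: (ELR_facts N ad). Qed.

Lemma etaELR_bound r K N : 1 < r -> (1 <= N)%N -> etaELR r K N <= r * (1 - r^-1) ^+ N.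
Proof.
move=> r1 N1; apply: etaELR_ub.
  rewrite mulr_ge0 ?exprn_ge0 ?(le_trans ler01 (ltW r1)) // subr_ge0 invf_le1 ?ltW //.
  exact: lt_trans ltr01 r1.
by move=> x p ad; case: (ELR_facts N ad) => _ _ _; apply.
Qed.
End A.
Lemma part2 (R : realType) (r : R) K : 1 < r -> (fun N => etaELR r K N) @ \oo --> 0.
Proof.
move=> r1.
have q0 : 0 <= 1 - r^-1 by rewrite subr_ge0 invf_le1 ?ltW // (lt_trans ltr01).
have q1 : `|1 - r^-1| < 1.
  rewrite ger0_norm // ltrBlDl ltrDr invr_gt0; exact: lt_trans ltr01 r1.
apply: (@squeeze_cvgr _ _ _ _ (cst 0) (fun N => r * (1 - r^-1) ^+ N)).
- near=> N; rewrite etaELR_ge0 /= etaELR_bound //.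
  by near: N; exact: nbhs_infty_ge.
- exact: cvg_cst.
- rewrite -(mulr0 r); apply: cvgMr; exact: cvg_expr.
Unshelve. all: by end_near. Qed.

Lemma part4 (R : realType) (r : R) K : 1 < r ->
  (fun N : nat => etaELR r K N) =O_\oo (fun N : nat => (1 - r^-1) ^+ N).
Proof.
move=> r1.
have q0 : 0 <= 1 - r^-1 by rewrite subr_ge0 invf_le1 ?ltW // (lt_trans ltr01).
apply/eqOP; near=> k; near=> N.
rewrite ger0_norm ?etaELR_ge0 // ger0_norm ?exprn_ge0 //.
apply: (le_trans (etaELR_bound _ _ _)) => //; first by near: N; exact: nbhs_infty_ge.
apply: ler_wpM2r; first exact: exprn_ge0.
by near: k; apply: nbhs_pinfty_ge; rewrite num_real.
Unshelve. all: by end_near. Qed.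
Section Series.
Variable R : realType.

Lemma geo_bound (q : R) N n : 0 <= q < 1 ->
  \sum_(N <= i < n) q ^+ i <= (1 - q)^-1.
Proof.
move=> /andP[q0 q1].
have q1' : 0 < 1 - q by rewrite subr_gt0.
rewrite -(ler_pM2l q1') mulfV ?gt_eqF // big_distrr /=.
case: (leqP N n) => Nn; last by rewrite big_geq ?ler01 // ltnW.
rewrite (telescope_sumr_eq (fun i => - q ^+ i)) //.
  by rewrite opprK addrC lerBlDr (le_trans (exprn_ile1 _ q0 (ltW q1))) // lerDl exprn_ge0.
by move=> k _; rewrite exprS; ring.
Qed.

Lemma bern (c : R) i : 0 <= c <= 1 -> 1 - c ^+ i <= i%:R * (1 - c).
Proof.
move=> /andP[c0 c1]; elim: i => [|i IH]; first by rewrite expr0 subrr mul0r.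
have : 1 - c ^+ i.+1 = (1 - c ^+ i) + c ^+ i * (1 - c) by rewrite exprSr; ring.
move=> ->; rewrite -nat1r mulrDl mul1r addrC lerD // ler_piMl ?subr_ge0 //.
exact: exprn_ile1.
Qed.

Lemma psum_cvg (f : nat -> R) N M : (forall i, 0 <= f i) ->
  (forall n, \sum_(N <= i < n) f i <= M) -> cvgn (fun n => \sum_(N <= i < n) f i).
Proof.
move=> f0 fM; apply: nondecreasing_is_cvgn.
  apply/nondecreasing_seqP => n.
  case: (leqP N n) => Nn; first by rewrite big_nat_recr //= lerDl.
  by rewrite !big_geq // ltnW.
by exists M => _ [n _ <-].
Qed.

Lemma inv_nat_le1 i : i%:R^-1 <= 1 :> R.
Proof. by case: i => [|i]; rewrite ?invr0 ?ler01 // invf_le1 // ler1n. Qed.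

Lemma inv_nat_mul_le1 i : i%:R^-1 * i%:R <= 1 :> R.
Proof. by case: i => [|i]; rewrite ?invr0 ?mul0r ?ler01 // mulVf // pnatr_eq0. Qed.

Lemma gamma_diff (r : R) K N : 1 < r -> (2 <= K)%N ->
  [/\ 0 <= gamma1 r K N, gamma1 r K N <= gamma2 r K N &
      gamma2 r K N - gamma1 r K N <= N%:R * ((K%:R - 1)^-1 * r)].
Proof.
move=> r1 K2.
have r0 : 0 < r by exact: lt_trans ltr01 r1.
set q := 1 - r^-1; pose c : R := 1 - (K%:R - 1)^-1.
have q0 : 0 <= q by rewrite subr_ge0 invf_le1 ?ltW.
have q1 : q < 1 by rewrite /q ltrBlDl ltrDr invr_gt0.
have qr : (1 - q)^-1 = r by rewrite /q opprB addrC subrK invrK.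
have K1 : 1 <= K%:R - 1 :> R by rewrite lerBrDr (_ : 1 + 1 = 2%:R :> R) // ler_nat.
have c0 : 0 <= c by rewrite subr_ge0 invf_le1 // (lt_le_trans ltr01).
have c1 : c <= 1 by rewrite lerBlDr lerDl invr_ge0 (le_trans ler01).
have ai i : 0 <= i%:R^-1 * q ^+ i <= q ^+ i.
  by rewrite mulr_ge0 ?invr_ge0 ?exprn_ge0 //= ler_piMl ?exprn_ge0 ?inv_nat_le1.
have bi i : 0 <= i%:R^-1 * q ^+ i * c ^+ i <= i%:R^-1 * q ^+ i.
  case/andP: (ai i) => a0 _.
  by rewrite mulr_ge0 ?exprn_ge0 //= ler_piMr ?exprn_ge0 ?exprn_ile1.
have dif i : i%:R^-1 * q ^+ i - i%:R^-1 * q ^+ i * c ^+ i <= q ^+ i * (1 - c).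
  have -> : i%:R^-1 * q ^+ i - i%:R^-1 * q ^+ i * c ^+ i = q ^+ i * (i%:R^-1 * (1 - c ^+ i)) by ring.
  rewrite ler_wpM2l ?exprn_ge0 //.
  apply: (le_trans (ler_wpM2l _ (bern i (introT andP (conj c0 c1))))); first by rewrite invr_ge0.
  by rewrite mulrA ler_piMl ?inv_nat_mul_le1 // subr_ge0.
set A := fun n => \sum_(N <= i < n) (i%:R^-1 * q ^+ i).
set B := fun n => \sum_(N <= i < n) (i%:R^-1 * q ^+ i * c ^+ i).
have Ab n : A n <= (1 - q)^-1.
  apply: le_trans (geo_bound N n (introT andP (conj q0 q1))).
  by rewrite /A big_nat_cond [X in _ <= X]big_nat_cond; apply: ler_sum => i _; case/andP: (ai i).
have Bb n : B n <= (1 - q)^-1.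
  apply: le_trans (Ab n).
  by rewrite /A /B big_nat_cond [X in _ <= X]big_nat_cond; apply: ler_sum => i _; case/andP: (bi i).
have cA : cvgn A by apply: psum_cvg (fun i => proj1 (andP (ai i))) Ab.
have cB : cvgn B by apply: psum_cvg (fun i => proj1 (andP (bi i))) Bb.
have g1E : gamma1 r K N = N%:R * limn B by [].
have g2E : gamma2 r K N = N%:R * limn A by [].
have N0 : 0 <= N%:R :> R by [].
have lB0 : 0 <= limn B.
  apply: limr_ge => //; near=> n; rewrite /B big_nat_cond sumr_ge0 // => i _; by case/andP: (bi i).
have lAB : limn B <= limn A.
  apply: ler_lim => //; near=> n.
  by rewrite /A /B big_nat_cond [X in _ <= X]big_nat_cond; apply: ler_sum => i _; case/andP: (bi i).
have lD : limn A - limn B <= (1 - c) * r.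
  rewrite -limB //; apply: limr_le; first exact: is_cvgB.
  near=> n; rewrite (_ : (A - B) n = A n - B n) // /A /B -sumrB.
  apply: (@le_trans _ _ (\sum_(N <= i < n) (q ^+ i * (1 - c)))).
    by rewrite big_nat_cond [X in _ <= X]big_nat_cond; apply: ler_sum => i _; apply: dif.
  by rewrite -big_distrl /= mulrC ler_wpM2l ?subr_ge0 // -qr geo_bound // q0 q1.
rewrite g1E g2E; split.
- exact: mulr_ge0.
- exact: ler_wpM2l.
- rewrite -mulrBr ler_wpM2l //; have -> : (K%:R - 1)^-1 = 1 - c :> R by rewrite /c; ring.
  exact: lD.
Unshelve. all: by end_near. Qed.

Lemma frac_diff (b g1 g2 : R) : 0 < b -> 0 <= g1 -> g1 <= g2 ->
  0 <= g2 / (b + g2) - g1 / (b + g1) <= (g2 - g1) / b.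
Proof.
move=> b0 g10 g12.
have g20 : 0 <= g2 by exact: le_trans g10 g12.
have bg1 : 0 < b + g1 by apply: lt_le_trans b0 _; rewrite lerDl.
have bg2 : 0 < b + g2 by apply: lt_le_trans b0 _; rewrite lerDl.
have -> : g2 / (b + g2) - g1 / (b + g1) = b * (g2 - g1) / ((b + g1) * (b + g2)).
  by field; rewrite !gt_eqF.
have d0 : 0 <= g2 - g1 by rewrite subr_ge0.
apply/andP; split; first by apply: divr_ge0; apply: mulr_ge0 => //; exact: ltW.
rewrite ler_pdivrMr ?mulr_gt0 //.
have -> : (g2 - g1) / b * ((b + g1) * (b + g2)) = (g2 - g1) * ((b + g1) * (b + g2) / b) by ring.
rewrite mulrC; apply: ler_wpM2l => //.
rewrite ler_pdivlMr //; by apply: ler_pM; rewrite ?(ltW b0) ?lerDl.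
Qed.

Lemma base_gt0 (r : R) N : 1 < r -> (1 <= N)%N -> 0 < base r N.
Proof.
move=> r1 N1; rewrite /base; apply: divr_gt0; last by apply: exprn_gt0; exact: lt_trans ltr01 r1.
rewrite subr_gt0 ltrXn2r; first by rewrite -lt0n.
  by rewrite subr_ge0 ltW.
by rewrite ltrBlDr ltrDl.
Qed.

Lemma inv_cvg : (fun K : nat => (K%:R - 1)^-1 : R) @ \oo --> 0.
Proof.
rewrite -(cvg_shiftn 2).
have -> : [sequence ((n + 2)%N%:R - 1)^-1 : R]_n = harmonic.
  apply/funext => n /=; congr (_^-1).
  by rewrite -[n.+1]addn1 !natrD (_ : 2%:R = 1 + 1 :> R) // addrA addrK.
exact: cvg_harmonic.
Qed.

Lemma part1 (r : R) N : 1 < r -> (1 <= N)%N ->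
  (fun K : nat => Ub r K N - Lb r K N) @ \oo --> 0.
Proof.
move=> r1 N1; have b0 := base_gt0 r1 N1.
apply: (@squeeze_cvgr _ _ _ _ (cst 0) (fun K : nat => (N%:R * r / base r N) * (K%:R - 1)^-1)).
- near=> K.
  have K2 : (2 <= K)%N by near: K; exact: nbhs_infty_ge.
  case: (gamma_diff N r1 K2) => g10 g12 gd.
  case/andP: (frac_diff b0 g10 g12) => h1 h2.
  rewrite /Ub /Lb /= h1 /=; apply: (le_trans h2).
  have -> : N%:R * r / base r N / (K%:R - 1) = (N%:R * ((K%:R - 1)^-1 * r)) / base r N by ring.
  by rewrite ler_wpM2r // invr_ge0 ltW.
- exact: cvg_cst.
- rewrite -(mulr0 (N%:R * r / base r N)); apply: cvgMr; exact: inv_cvg.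
Unshelve. all: by end_near. Qed.
End Series.
Section Gen.
Variable R : realType.
Implicit Types x p : nat -> R.

Lemma revE K x p k : cumP p K = 1 -> (1 <= k <= K.+1)%N ->
  Defs.rev K x p k = x k * (1 - cumP p k.-1).
Proof.
move=> cK kK; have := cumP_tail p kK; rewrite cK => h.
by rewrite /Defs.rev; congr (_ * _); rewrite h addrAC subrr add0r.
Qed.

Lemma reserve_eq K x p t : (1 <= t <= K)%N ->
  (forall k, (1 <= k <= K)%N -> Defs.rev K x p k <= Defs.rev K x p t) ->
  (forall i, (t < i <= K)%N -> Defs.rev K x p i < Defs.rev K x p t) ->
  reserve K x p = t.
Proof.
move=> /andP[t1 tK] Hle Hlt; apply/eqP; rewrite eqn_leq; apply/andP; split.
  apply/bigmax_leqP_seq => i; rewrite mem_index_iota ltnS => /andP[i1 iK] Pi.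
  rewrite leqNgt; apply/negP => ti.
  have tK' : (t < K.+1)%N by [].
  have := implyP (forallP Pi (Ordinal tK')) t1 => /= h.
  by have := Hlt i; rewrite ti iK => /(_ isT); rewrite ltNge h.
have tin : t \in index_iota 1 K.+1 by rewrite mem_index_iota ltnS t1 tK.
apply: (leq_bigmax_seq (F := fun i => i) t tin).
apply/forallP => k; apply/implyP => k0; apply: Hle.
by rewrite k0 -ltnS ltn_ord.
Qed.

Lemma ratio_mono (a b D : R) : 0 <= a -> a <= b -> 0 <= D -> a / b <= (a + D) / (b + D).
Proof.
move=> a0 ab D0; have [b0|b0] := eqVneq b 0.
  by rewrite b0 invr0 mulr0 divr_ge0 // addr_ge0.
have bp : 0 < b by rewrite lt_neqAle eq_sym b0 (le_trans a0).
have bD : 0 < b + D by rewrite ltr_wpDr.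
rewrite ler_pdivrMr // (_ : (a + D) / (b + D) * b = ((a + D) * b) / (b + D)); last by rewrite mulrAC.
rewrite ler_pdivlMr //; nra.
Qed.
End Gen.

Section LB.
Variable R : realType.

Definition xh (i : nat) : R := i%:R.
Definition ph K (j : nat) : R := if (j < K)%N then j%:R^-1 - j.+1%:R^-1 else K%:R^-1.

Lemma ph_cum K i : (i < K)%N -> cumP (ph K) i = 1 - i.+1%:R^-1.
Proof.
elim: i => [|i IH] iK; first by rewrite cumP0 invr1 subrr.
rewrite cumPS IH ?(ltnW iK) // /ph iK; ring.
Qed.

Lemma ph_cumK K : (1 <= K)%N -> cumP (ph K) K = 1.
Proof.
case: K => // K _; rewrite cumPS ph_cum // /ph ltnn; ring.
Qed.

Lemma ph_pos K i : (1 <= i <= K)%N -> 0 < ph K i.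
Proof.
move=> /andP[i1 iK]; rewrite /ph; case: ifP => _; last by rewrite invr_gt0 ltr0n (leq_trans i1 iK).
by rewrite subr_gt0 ltf_pV2 ?posrE ?ltr0n // ltr_nat.
Qed.

Lemma LB_adm (r : R) K : (1 <= K)%N -> K%:R <= r -> admissible r K xh (ph K).
Proof.
move=> K1 Kr; split; first exact: ph_pos.
split; first exact: ph_cumK.
split; first by rewrite /xh ltr01.
split; first by move=> i _; rewrite /xh ltr_nat.
by rewrite /xh mulr1.
Qed.

Lemma abel (G : nat -> R) n : G 0%N = 0 ->
  \sum_(1 <= i < n.+1) (G i - G i.-1) * i%:R = n%:R * G n - \sum_(0 <= i < n) G i.
Proof.
move=> G0; elim: n => [|n IH]; first by rewrite big_geq // big_geq // mul0r subrr.
rewrite big_nat_recr //= IH big_nat_recr //= -natr1; ring.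
Qed.

Lemma sh_gt0 K : (1 <= K)%N -> 0 < series harmonic K :> R.
Proof.
case: K => // K _; rewrite /series /= big_nat_recl //=.
by rewrite ltr_pwDl ?invr_gt0 ?ltr0n // sumr_ge0.
Qed.

Lemma LB_bound (r : R) K N : (1 <= N)%N -> (1 <= K)%N -> K%:R <= r ->
  1 - N%:R / series harmonic K <= etaELR r K N.
Proof.
move=> N1 K1 Kr.
apply: le_trans (etaELR_ge N (LB_adm K1 Kr)).
have cK := ph_cumK K1.
set p := ph K.
have tK : reserve K xh p = K.
  have revs k : (1 <= k <= K)%N -> Defs.rev K xh p k = 1.
    move=> /andP[k1 kK]; rewrite revE // ?k1 ?(leq_trans kK) //.
    case: k k1 kK => // k _ kK; rewrite /= ph_cum // /xh opprB addrC subrK mulfV // pnatr_eq0.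
  apply: reserve_eq; first by rewrite K1 leqnn.
    by move=> k kK; rewrite !revs ?K1 ?leqnn.
  by move=> i /andP[Ki iK]; move: (leq_trans Ki iK); rewrite ltnn.
rewrite /ELR tK.
set G := fun i => cumP p i ^+ N.
have den : \sum_(1 <= i < K.+1) zcoef N p i * xh i = K%:R - \sum_(0 <= i < K) G i.
  rewrite (abel (G := G) K); first by rewrite /G cK expr1n mulr1.
  by rewrite /G cumP0 expr0n; move: N1; rewrite lt0n => /negbTE ->.
have Hpos : 0 < series harmonic K :> R.
  exact: sh_gt0.
have denH : series harmonic K <= K%:R - \sum_(0 <= i < K) G i.
  rewrite lerBrDr addrC -lerBrDr.
  have -> : K%:R - series harmonic K = \sum_(0 <= i < K) (1 - harmonic i) :> R.
    by rewrite sumrB /series /= sumr_const_nat subn0.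
  rewrite big_nat_cond [X in _ <= X]big_nat_cond; apply: ler_sum => i /andP[/andP[_ iK] _].
  rewrite /G /= -(ph_cum iK) -/p.
  have F0 : 0 <= cumP p i by apply: (cumP_ge0 (ph_pos (K:=K))); rewrite ltnW.
  have F1 : cumP p i <= 1 by rewrite ph_cum // lerBlDr lerDl invr_ge0.
  rewrite -(prednK N1) exprS ler_piMr // exprn_ile1 //.
rewrite -den in denH.
set D := \sum_(1 <= i < K.+1) zcoef N p i * xh i in den denH *.
have Dp : 0 < D by exact: lt_le_trans Hpos denH.
have split : \sum_(1 <= i < K) zcoef N p i * xh i = D - zcoef N p K * xh K.
  by rewrite /D big_nat_recr //= addrK.
rewrite split mulrBl mulfV ?gt_eqF // lerB //.
have zK : zcoef N p K * xh K <= N%:R.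
  rewrite /zcoef cK expr1n /xh.
  have Km : (K.-1 < K)%N by rewrite prednK.
  rewrite /p (ph_cum Km) (prednK K1).
  have c01 : (0 : R) <= 1 - (K%:R : R)^-1 <= 1.
    rewrite subr_ge0 lerBlDr lerDl invr_ge0 ler0n andbT invf_le1 ?ler1n // ltr0n.
    exact: K1.
  apply: le_trans (ler_wpM2r _ (bern N c01)) _; first exact: ler0n.
  by rewrite opprB addrC subrK -mulrA mulVf ?mulr1 // pnatr_eq0 -lt0n.
apply: le_trans (ler_wpM2r (ltW _) zK) _; first by rewrite invr_gt0.
by rewrite ler_wpM2l // lef_pV2 ?posrE.
Qed.
End LB.

Section Split.
Variable R : realType.
Implicit Types x p : nat -> R.

Lemma num_facts (r : R) K N x p t : admissible r K x p -> (t <= K.+1)%N ->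
  0 <= \sum_(1 <= i < t) zcoef N p i * x i <= \sum_(1 <= i < K.+1) zcoef N p i * x i.
Proof.
move=> [pos [sum1 [x1 [xinc xK]]]] tK.
have zx i : (1 <= i <= K)%N -> 0 <= zcoef N p i * x i.
  move=> /andP[i1 iK]; rewrite mulr_ge0 ?(zcoef_ge0 pos) ?i1 //.
  apply: le_trans (ltW x1) (x_mono xinc (leqnn 1) _); by rewrite i1 iK.
have tl a b : (1 <= a)%N -> (b <= K.+1)%N -> 0 <= \sum_(a <= i < b) zcoef N p i * x i.
  move=> a1 bK; rewrite big_nat_cond; apply: sumr_ge0 => i /andP[/andP[ai ib] _].
  by apply: zx; rewrite (leq_trans a1 ai) -ltnS (leq_trans ib bK).
case: t tK => [|t] tK; first by rewrite big_geq // lexx tl.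
rewrite (big_cat_nat _ (n := t.+1) (m := 1%N) (p := K.+1)) //= tl //= lerDl tl //.
Qed.

Lemma split_ELR (r : R) K N x p : admissible r K x p -> (2 <= reserve K x p)%N ->
  exists x' p', admissible r K.+1 x' p' /\ ELR K N x p <= ELR K.+1 N x' p'.
Proof.
move=> ad t2; have [pos [sum1 [x1 [xinc xK]]]] := ad.
case: (reserveP K x p) => [t0|[/andP[t1 tK] revt revlt]]; first by rewrite t0 in t2.
set t := reserve K x p in t2 t1 tK revt revlt *.
have K2 : (2 <= K)%N := leq_trans t2 tK.
have p1 : 0 < p 1%N by apply: pos; rewrite (leq_trans _ K2).
have p2 : 0 < p 2%N by apply: pos; rewrite K2.
have x12 : x 1%N < x 2%N by apply: xinc; rewrite K2.
have cK : cumP p K = 1 by [].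
have cP1 : cumP p 1%N = p 1%N by rewrite cumPS cumP0 add0r.
have h2K : (1 <= 2 <= K.+1)%N by rewrite /= ltnW.
pose d := (x 2%N - x 1%N) / 2.
have d0 : 0 < d by rewrite divr_gt0 // subr_gt0.
pose y := x 1%N + d.
have y2 : y < x 2%N by rewrite /y -ltrBrDl /d ltr_pdivrMr // ltr_pMr ?subr_gt0 // ltr1n.
have y0 : 0 < y by rewrite /y addr_gt0.
pose S2 := 1 - p 1%N.
have S2p : 0 < S2.
  have := cumP_tail p h2K.
  rewrite cK cP1 => h; rewrite /S2 h addrAC subrr add0r.
  rewrite big_ltn // ltr_pwDl // big_nat_cond sumr_ge0 // => i /andP[/andP[i3 iK] _].
  by apply/ltW/pos; apply/andP; split; [exact: leq_trans _ i3 | exact: iK].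
pose M := Defs.rev K x p t.
have rev2 : Defs.rev K x p 2 = x 2%N * S2 by rewrite (revE _ cK h2K) /= cP1.
have gapp : 0 < M - y * S2.
  rewrite subr_gt0 (lt_le_trans _ (revt 2%N _)) ?K2 // rev2 ltr_pM2r //.
pose e := Num.min (p 1%N / 2) ((M - y * S2) / y).
have e0 : 0 < e by rewrite lt_min divr_gt0 // divr_gt0.
have ep : e < p 1%N by rewrite gt_min ltr_pdivrMr // ltr_pMr // ltr1n.
have ey : y * e <= M - y * S2 by rewrite mulrC -ler_pdivlMr // ge_min lexx orbT.
pose x' := fun l => if (l <= 1)%N then x l else if l == 2%N then y else x l.-1.
pose p' := fun l => if l == 1%N then p 1%N - e else if l == 2%N then e else p l.-1.
have x'E : forall l, (3 <= l)%N -> x' l = x l.-1 by case=> [|[|[|l]]].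
have cP1' : cumP p' 1%N = p 1%N - e by rewrite cumPS cumP0 add0r.
have cPl : forall l, (2 <= l)%N -> cumP p' l = cumP p l.-1.
  elim=> [|l IH] // l2; move: l2; rewrite leq_eqVlt => /orP[/eqP <-|l2].
    by rewrite cumPS cP1' /= cP1 subrK.
  rewrite cumPS IH // /p' /=.
  by case: l l2 {IH} => [|[|l]] // _; rewrite cumPS.
have cK' : cumP p' K.+1 = 1 by rewrite cPl.
exists x', p'.
have ad' : admissible r K.+1 x' p'.
  split.
    move=> i /andP[i1 iK]; rewrite /p'.
    case: eqP => [_|/eqP i1']; first by rewrite subr_gt0.
    case: eqP => [//|/eqP i2'].
    apply: pos; case: i i1 iK i1' i2' => [|[|[|i]]] //= *; by rewrite -ltnS.
  split; first exact: cK'.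
  split; first by rewrite /x'.
  split.
    move=> i /andP[i1 iK]; rewrite /x'.
    case: i i1 iK => [|[|[|i]]] //= _ iK; first by rewrite /y ltrDl.
    apply: xinc; by rewrite -ltnS.
  by rewrite x'E.
split => //.
have rev' : forall k, (3 <= k <= K.+1)%N -> Defs.rev K.+1 x' p' k = Defs.rev K x p k.-1.
  move=> k /andP[k3 kK].
  have hk' : (1 <= k <= K.+2)%N by rewrite (leq_trans _ k3) // (leq_trans kK).
  have hk : (1 <= k.-1 <= K.+1)%N.
    by case: k k3 kK {hk'} => [|[|[|k]]] //= _ kK; rewrite ltnW.
  rewrite (revE _ cK' hk') (revE _ cK hk) x'E // cPl //.
  by case: k k3 {kK hk hk'} => [|[|[|k]]].
have rev1 : Defs.rev K.+1 x' p' 1 = Defs.rev K x p 1.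
  by rewrite !revE ?cK // ?(leq_trans _ K2) // !cumP0.
have rev2' : Defs.rev K.+1 x' p' 2 = y * (S2 + e).
  have h2 : (1 <= 2 <= K.+2)%N by rewrite /= ltnW // ltnW.
  rewrite (revE _ cK' h2) /= cP1' /x' /=; congr (_ * _); rewrite /S2; ring.
have revt1 : Defs.rev K.+1 x' p' t.+1 = M.
  by rewrite rev' // !ltnS t2 tK.
have tE : reserve K.+1 x' p' = t.+1.
  apply: reserve_eq; first by apply/andP; split; [|rewrite ltnS].
    move=> k /andP[k1 kK]; rewrite revt1.
    case: k k1 kK => [|[|[|k]]] //= _ kK.
    - by rewrite rev1 revt // (leq_trans _ K2).
    - by rewrite rev2' -/M mulrDr -lerBrDl.
    - by rewrite rev' ?kK //= revt.
  move=> i /andP[ti iK]; rewrite revt1 rev'; last by rewrite iK andbT (leq_trans _ ti) // ltnS.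
  by apply: revlt; case: i ti iK => // i ti iK; apply/andP; split; [exact: ti | exact: iK].
pose D := (p 1%N ^+ N - (p 1%N - e) ^+ N) * d.
have W m : (3 <= m)%N -> \sum_(1 <= i < m) zcoef N p' i * x' i =
     \sum_(1 <= i < m.-1) zcoef N p i * x i + D.
  move=> m3.
  rewrite big_ltn ?(leq_trans _ m3) // big_ltn ?(leq_trans _ m3) //.
  rewrite [in RHS]big_ltn; last by case: m m3 => [|[|[|m]]].
  rewrite [X in _ + (_ + X)]big_add1 /=.
  have -> : \sum_(2 <= i < m.-1) zcoef N p' i.+1 * x' i.+1 = \sum_(2 <= i < m.-1) zcoef N p i * x i.
    apply: eq_big_nat => i /andP[i2 _].
    rewrite /zcoef /= cPl ?(leq_trans i2) // cPl //.
    by rewrite /x'; case: i i2 => [|[|i]].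
  rewrite /zcoef /= cP1' (cPl 2 (leqnn 2)) /= cP1 /x' /= /D /y !cumP0; ring.
have D0 : 0 <= D.
  apply: mulr_ge0; last exact: ltW.
  rewrite subr_ge0; apply: lerXn2r; rewrite ?nnegrE ?subr_ge0 ?ltW //.
  by rewrite ltrBlDr ltrDl.
rewrite /ELR tE W ?ltnS ?(leq_trans _ t2) // W ?ltnS ?(leq_trans _ K2) //=.
have /andP[n0 nd] := num_facts N ad (ltnW (tK : (t < K.+1)%N)).
exact: ratio_mono.
Qed.
End Split.

Section Part3.
Variable R : realType.

Lemma eta_mono (r : R) K N : etaELR r K N <= etaELR r K.+1 N.
Proof.
apply: etaELR_ub; first exact: etaELR_ge0.
move=> x p ad; case: (leqP 2 (reserve K x p)) => t2.
  have [x' [p' [ad' le]]] := split_ELR N ad t2.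
  exact: le_trans le (etaELR_ge N ad').
by rewrite /ELR big_geq ?mul0r ?etaELR_ge0.
Qed.

Lemma eta_cvg (r : R) N : cvgn (fun K => etaELR r K N).
Proof.
apply: nondecreasing_is_cvgn; first by apply/nondecreasing_seqP => K; exact: eta_mono.
by exists 1 => _ [K _ <-]; exact: etaELR_le1.
Qed.

Lemma sh_nd : nondecreasing_seq (series (@harmonic R)).
Proof.
apply/nondecreasing_seqP => n; rewrite /series /= big_nat_recr //= lerDl.
by rewrite invr_ge0.
Qed.

Lemma part3 N : (1 <= N)%N ->
  (fun r : R => limn (fun K : nat => etaELR r K N)) @ +oo --> (1 : R).
Proof.
move=> N1; apply/cvgrPdist_le => eps eps0.
have [K0 HK0] : exists K0, N%:R / eps <= series (@harmonic R) K0.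
  apply: contrapT => H; apply: (@dvg_harmonic R); apply: nondecreasing_is_cvgn.
    exact: sh_nd.
  exists (N%:R / eps) => _ [n _ <-]; rewrite leNgt; apply/negP => h.
  by apply: H; exists n; apply/ltW.
have HK1 : N%:R / eps <= series (@harmonic R) K0.+1 by apply: le_trans HK0 (sh_nd _).
have Hp := @sh_gt0 R K0.+1 isT.
near=> r.
have Kr : K0.+1%:R <= r by near: r; apply: nbhs_pinfty_ge; rewrite num_real.
have lb := LB_bound N1 (isT : (1 <= K0.+1)%N) Kr.
have l1 : limn (fun K => etaELR r K N) <= 1.
  by apply: limr_le; [exact: eta_cvg | near=> K; exact: etaELR_le1].
have l2 : etaELR r K0.+1 N <= limn (fun K => etaELR r K N).
  have nd : nondecreasing_seq (fun K => etaELR r K N).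
    by apply/nondecreasing_seqP => K; exact: eta_mono.
  apply: limr_ge; first exact: eta_cvg.
  near=> K; apply: nd; by near: K; apply: nbhs_infty_ge.
rewrite ger0_norm ?subr_ge0 // lerBlDr -lerBlDl.
apply: le_trans (le_trans lb l2).
rewrite lerB // ler_pdivrMr //.
by move: HK1; rewrite ler_pdivrMr // mulrC.
Unshelve. all: by end_near. Qed.
End Part3.

Unset Implicit Arguments.

Theorem corollary3 (R : realType) :
  (* (i) *)
  (forall (r : R) (N : nat), 1 < r -> (1 <= N)%N ->
     (fun K : nat => Ub r K N - Lb r K N) @ \oo --> 0) /\
  (* (ii) *)
  (forall (r : R) (K : nat), 1 < r -> (2 < K)%N ->
     (fun N : nat => etaELR r K N) @ \oo --> 0) /\
  (* (iii) *)
  (forall N : nat, (1 <= N)%N ->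
     (forall r : R, 1 < r -> cvgn (fun K : nat => etaELR r K N)) /\
     (fun r : R => limn (fun K : nat => etaELR r K N)) @ +oo --> (1 : R)) /\
  (* (iv) *)
  (forall (r : R) (K : nat), 1 < r -> (2 < K)%N ->
     (fun N : nat => etaELR r K N) =O_\oo (fun N : nat => (1 - r^-1) ^+ N)).
Proof.
split; first by move=> r N r1 N1; exact: part1.
split; first by move=> r K r1 _; exact: part2.
split; first by move=> N N1; split; [move=> r _; exact: eta_cvg | exact: part3].
by move=> r K r1 _; exact: part4.
Qed.
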